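(* For all integers $n\ge0$: \begin{align*} pl_2(2n+1)&\equiv pl_2(2n)\pmod 2,\\ pl_3(3n+2)&\equiv 0\pmod 3,\\ pl_3(3n+1)&\equiv pl_3(3n)\pmod 3,\\ pl_5(5n+2)&\equiv pl_5(5n+4)\pmod 5,\\ pl_5(5n+1)&\equiv pl_5(5n+3)\pmod 5,\\ pl_7(7n+2)+pl_7(7n+3)&\equiv pl_7(7n+4)+pl_7(7n+5)\pmod 7. \end{align*}
   Context: For a positive integer $k$, $pl_k(n)$ denotes the number of $k$-component plane partitions of $n$ (plane partitions of $n$ all of whose entries are $\le k$), with $pl_k(0)=1$ and $pl_k(n)=0$ for $n<0$; equivalently $\sum_{n\ge0}pl_k(n)q^n=\prod_{n=1}^{\infty}(1-q^n)^{-\min(k,n)}$. *)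

(* Defs.v *)
From mathcomp Require Import all_boot.
Set Implicit Arguments. Unset Strict Implicit. Unset Printing Implicit Defensive.

(* Coefficient extraction from the generating function
     sum_n pl_k(n) q^n = prod_{m>=1} (1 - q^m)^{-min(k,m)}.
   Using (1 - q^m)^{-c} = sum_{i>=0} 'C(i+c-1, i) q^{m i}:
   plc k m n = [q^n] prod_{j=1}^{m} (1 - q^j)^{-min(k,j)}. *)
Fixpoint plc (k m n : nat) : nat :=
  match m with
  | 0 => (n == 0)
  | m'.+1 =>
      \sum_(0 <= i < (n %/ m).+1)
        'C(i + minn k m - 1, i) * plc k m' (n - m * i)
  end.

(* pl_k(n): factors with m > n do not affect the coefficient of q^n. *)
Definition pl (k n : nat) : nat := plc k n n.

(* Main.v *)
Require Import Defs.
From mathcomp Require Import all_boot.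
From mathcomp Require Import all_algebra ring zify.
Set Implicit Arguments. Unset Strict Implicit. Unset Printing Implicit Defensive.
Import GRing.Theory.

Lemma plc_big k n d : plc k (n + d) n = plc k n n.
Proof.
elim: d => [|d IH]; first by rewrite addn0.
rewrite addnS /= divn_small ?ltnS ?leq_addr // big_nat1 bin0 mul1n muln0 subn0.
exact: IH.
Qed.

Lemma pl_plc k n N : (n <= N)%N -> pl k n = plc k N n.
Proof. by move=> h; rewrite /pl -(subnKC h) plc_big. Qed.

Section Mult.
Local Open Scope ring_scope.
Variable R : nzRingType.

Lemma sum_mult m n (F : nat -> R) : (0 < m)%N ->
  \sum_(j < n.+1) (if (m %| j)%N then F j else 0) = \sum_(i < (n %/ m).+1) F (m * i)%N.
Proof.
move=> m0; elim: n => [|n IH].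
  by rewrite div0n !big_ord_recr !big_ord0 /= dvdn0 muln0.
rewrite big_ord_recr /= IH divnS //.
case: ifP => hd; last by rewrite addr0.
rewrite add1n [in RHS]big_ord_recr /=; congr (_ + F _)%R.
by have := divnS n m0; rewrite hd add1n => <-; rewrite mulnC divnK.
Qed.
End Mult.

Section Main.
Local Open Scope ring_scope.
Variable R : comNzRingType.

Definition eqN N (a b : {poly R}) := forall i, (i <= N)%N -> a`_i = b`_i.

Lemma eqN_refl N a : eqN N a a. Proof. by []. Qed.
Lemma eqN_sym N a b : eqN N a b -> eqN N b a. Proof. by move=> h i hi; rewrite h. Qed.
Lemma eqN_trans N a b c : eqN N a b -> eqN N b c -> eqN N a c.
Proof. by move=> h1 h2 i hi; rewrite h1 // h2. Qed.

Lemma eqN_mul N a a' b b' : eqN N a a' -> eqN N b b' -> eqN N (a * b) (a' * b').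
Proof.
move=> ha hb i hi; rewrite !coefM; apply: eq_bigr => j _.
have hj : (j <= i)%N by rewrite -ltnS.
rewrite ha ?hb //; [exact: leq_trans (leq_subr _ _) hi | exact: leq_trans hj hi].
Qed.

Lemma eqN_prod N n (F : 'I_n -> {poly R}) :
  (forall j, eqN N (F j) 1) -> eqN N (\prod_(j < n) F j) 1.
Proof.
move=> h; apply: (big_ind (fun x => eqN N x 1)) => //.
by move=> x y hx hy; rewrite -[1](mulr1 1); apply: eqN_mul.
Qed.

Definition H N m c : {poly R} :=
  \poly_(i < N.+1) (if (m %| i)%N then ('C(i %/ m + c - 1, i %/ m))%:R else 0).

Lemma coefH N m c i : (i <= N)%N ->
  (H N m c)`_i = if (m %| i)%N then ('C(i %/ m + c - 1, i %/ m))%:R else 0.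
Proof. by rewrite coef_poly ltnS => ->. Qed.

Lemma H0 N m : (0 < m)%N -> eqN N (H N m 0) 1.
Proof.
move=> m0 i hi; rewrite coefH // coef1.
case: i hi => [|i] _; first by rewrite dvdn0 div0n bin0.
case: ifP => // hd; rewrite bin_small //.
have h : (0 < i.+1 %/ m)%N by rewrite divn_gt0 // dvdn_leq.
by rewrite addn0 ltn_subrL h.
Qed.

Lemma Hstep N m c : (0 < m)%N -> eqN N (H N m c.+1 * (1 - 'X^m)) (H N m c).
Proof.
move=> m0 i hi; rewrite mulrBr mulr1 coefB coefMXn [(H _ _ c.+1)`_i]coefH // [(H _ _ c)`_i]coefH //.
case: (ltnP i m) => him.
  by rewrite subr0 (divn_small him) !bin0.
rewrite coefH; last exact: leq_trans (leq_subr _ _) hi.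
have -> : (m %| i)%N = (m %| i - m)%N by rewrite -{1}(subnK him) dvdn_addl.
case: ifP => hd; last by rewrite subrr.
case/dvdnP: hd => k hk.
have ei : i = (k.+1 * m)%N by rewrite mulSn addnC -hk subnK.
rewrite hk ei !mulnK //.
have -> : (k.+1 + c.+1 - 1 = (k + c).+1)%N by lia.
have -> : (k + c.+1 - 1 = k + c)%N by lia.
have -> : (k.+1 + c - 1 = k + c)%N by lia.
by rewrite binS natrD addrK.
Qed.

Lemma Hinv N m c : (0 < m)%N -> eqN N (H N m c * (1 - 'X^m) ^+ c) 1.
Proof.
move=> m0; elim: c => [|c IH]; first by rewrite expr0 mulr1; exact: H0.
rewrite exprS mulrA; apply: eqN_trans IH.
by apply: eqN_mul; [exact: Hstep | exact: eqN_refl].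
Qed.

Definition A N k m := \prod_(j < m) H N j.+1 (minn k j.+1).

Lemma coefA N k m n : (n <= N)%N -> (A N k m)`_n = (plc k m n)%:R.
Proof.
elim: m n => [|m IH] n hn; first by rewrite /A big_ord0 coef1.
rewrite /A big_ord_recr /= -/(A N k m) mulrC coefM.
rewrite (eq_bigr (fun j : 'I_n.+1 => if (m.+1 %| j)%N then
   ('C(j %/ m.+1 + minn k m.+1 - 1, j %/ m.+1))%:R * (A N k m)`_(n - j)%N else 0)); last first.
  move=> j _; rewrite coefH; last by apply: leq_trans hn; rewrite -ltnS.
  by case: ifP => _ //; rewrite mul0r.
rewrite (sum_mult _ (fun j => ('C(j %/ m.+1 + minn k m.+1 - 1, j %/ m.+1))%:R
   * (A N k m)`_(n - j)%N)) //.
rewrite natr_sum big_mkord; apply: eq_bigr => i _.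
rewrite mulKn // IH ?natrM //; exact: leq_trans (leq_subr _ _) hn.
Qed.

Variable p : nat.
Hypothesis hp : p \in [pchar R].

Lemma p_gt0 : (0 < p)%N.
Proof. exact: prime_gt0 (pcharf_prime hp). Qed.

Definition C N : {poly R} := \prod_(j < N) (1 - 'X^(j.+1)) ^+ minn p j.+1.
Definition P' N : {poly R} := \prod_(j < N) (1 - 'X^(j.+1)) ^+ (p - minn p j.+1).
Definition U N := \prod_(j < N) H N (p * j.+1) 1.

Lemma AC N : eqN N (A N p N * C N) 1.
Proof.
rewrite /A /C -big_split /=; apply: eqN_prod => j; exact: Hinv.
Qed.

Lemma frob m : (1 - 'X^m) ^+ p = 1 - 'X^(p * m) :> {poly R}.
Proof.
have hp' : p \in [pchar {poly R}] by rewrite pchar_poly.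
rewrite -(pFrobenius_autE hp') pFrobenius_autB_comm; last exact: mulrC.
by rewrite pFrobenius_aut1 pFrobenius_autE -exprM mulnC.
Qed.

Lemma CP N : C N * P' N = \prod_(j < N) (1 - 'X^(p * j.+1)).
Proof.
rewrite /C /P' -big_split; apply: eq_bigr => j _ /=.
by rewrite -exprD subnKC ?geq_minl // frob.
Qed.

Lemma SU N : eqN N (\prod_(j < N) (1 - 'X^(p * j.+1)) * U N) 1.
Proof.
rewrite /U -big_split /=; apply: eqN_prod => j.
rewrite mulrC -[X in _ * X]expr1; apply: Hinv.
by rewrite muln_gt0 p_gt0.
Qed.

Definition sparse (q : {poly R}) := forall i, ~~ (p %| i)%N -> q`_i = 0.

Lemma sparseU N : sparse (U N).
Proof.
apply: (big_ind sparse).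
- by move=> i hi; rewrite coef1; case: i hi => //; rewrite dvdn0.
- move=> x y hx hy i hi; rewrite coefM big1 // => j _.
  case hj: (p %| j)%N; last by rewrite hx ?hj // mul0r.
  rewrite hy ?mulr0 //; apply: contra hi => h.
  have hji : (j <= i)%N by rewrite -ltnS.
  by rewrite -(subnK hji) dvdn_add.
- move=> j _ i hi; rewrite coef_poly; case: ifP => // _; case: ifP => // hd.
  by case/negP: hi; apply: dvdn_trans hd; apply: dvdn_mulr.
Qed.

Lemma A_PU N : eqN N (A N p N) (P' N * U N).
Proof.
have h1 := eqN_mul (@eqN_refl N (A N p N)) (eqN_sym (SU (N:=N))).
rewrite mulr1 in h1; refine (eqN_trans h1 _).
have h2 := eqN_mul (AC (N:=N)) (@eqN_refl N (P' N * U N)).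
rewrite mul1r in h2.
by rewrite -CP !mulrA; rewrite !mulrA in h2.
Qed.

Lemma plc_res N t r : (r < p)%N -> (p * t + r <= N)%N ->
  (plc p N (p * t + r))%:R = \sum_(i < t.+1) (U N)`_(p * i) * (P' N)`_(p * (t - i) + r).
Proof.
move=> hr hN; rewrite -(coefA p N hN) (@A_PU N _ hN) mulrC coefM.
rewrite (eq_bigr (fun j : 'I_(p * t + r).+1 => if (p %| j)%N then
   (U N)`_j * (P' N)`_(p * t + r - j)%N else 0)); last first.
  move=> j _; case: ifP => hj //; by rewrite sparseU ?hj // mul0r.
rewrite (sum_mult _ (fun j => (U N)`_j * (P' N)`_(p * t + r - j)%N)) ?p_gt0 //.
rewrite mulnC divnMDl ?p_gt0 // divn_small // addn0; apply: eq_bigr => i _.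
have hi : (p * i <= p * t)%N by rewrite leq_pmul2l ?p_gt0 // -ltnS.
by rewrite mulnBr (mulnC t); congr (_ * (P' N)`_ _); lia.
Qed.

Lemma relation (sa sb : seq nat) n :
  all (fun a => a < p)%N sa -> all (fun b => b < p)%N sb ->
  (forall N t, (p <= N)%N ->
    \sum_(a <- sa) (P' N)`_(p * t + a) = \sum_(b <- sb) (P' N)`_(p * t + b)) ->
  ((\sum_(a <- sa) pl p (p * n + a))%:R : R) = (\sum_(b <- sb) pl p (p * n + b))%:R.
Proof.
move=> ha hb hrel; set N := (p * n + p)%N.
have key s : all (fun a => a < p)%N s -> ((\sum_(a <- s) pl p (p * n + a))%:R : R) =
   \sum_(i < n.+1) (U N)`_(p * i) * \sum_(a <- s) (P' N)`_(p * (n - i) + a).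
  move=> hs; rewrite natr_sum (eq_big_seq (fun a =>
      \sum_(i < n.+1) (U N)`_(p * i) * (P' N)`_(p * (n - i) + a))); last first.
    move=> a ains; have ha' : (a < p)%N by move/allP: hs => /(_ a ains).
    by rewrite (@pl_plc p _ N) ?plc_res // /N leq_add2l ltnW.
  rewrite exchange_big /=; apply: eq_bigr => i _; by rewrite mulr_sumr.
rewrite !key //; apply: eq_bigr => i _; rewrite hrel //.
by rewrite /N leq_addl.
Qed.

Lemma P'_short N : (p.-1 <= N)%N ->
  P' N = \prod_(j < p.-1) (1 - 'X^(j.+1)) ^+ (p - minn p j.+1).
Proof.
move=> h; rewrite /P' -(subnKC h) big_split_ord /= [X in _ * X]big1 ?mulr1 // => j _.
have p0 := p_gt0.
rewrite (minn_idPl _) ?subnn ?expr0 //=; lia.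
Qed.

End Main.

Local Open Scope ring_scope.
Fixpoint fromlist (R : comNzRingType) (cs : seq int) : {poly R} :=
  if cs is c :: cs' then (c%:~R)%:P + 'X * fromlist R cs' else 0.

Lemma coef_fromlist (R : comNzRingType) cs i : (fromlist R cs)`_i = (nth 0 cs i)%:~R.
Proof.
elim: cs i => [|c cs IH] i /=; first by rewrite coef0 nth_nil.
rewrite coefD coefC coefXM; case: i => [|i] /=; first by rewrite addr0.
by rewrite add0r IH.
Qed.

Lemma intr_sumL (R : comNzRingType) (s : seq nat) (f : nat -> int) :
  (\sum_(a <- s) f a)%:~R = \sum_(a <- s) (f a)%:~R :> R.
Proof. by elim: s => [|a s IH]; rewrite ?big_nil ?big_cons ?intrD ?IH. Qed.

Definition relf (p : nat) (cs : seq int) (sa sb : seq nat) (t : nat) : int :=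
  \sum_(a <- sa) cs`_(p * t + a) - \sum_(b <- sb) cs`_(p * t + b).

Lemma final p (pr : prime p) (cs : seq int) (sa sb : seq nat) B :
  all (fun a => a < p)%N sa -> all (fun b => b < p)%N sb ->
  (forall R : comNzRingType,
     \prod_(j < p.-1) (1 - 'X^(j.+1)) ^+ (p - minn p j.+1) = fromlist R cs) ->
  (size cs <= p * B)%N ->
  all (fun t => (p %| relf p cs sa sb t)%Z) (iota 0 B) ->
  forall n, (\sum_(a <- sa) pl p (p * n + a) = \sum_(b <- sb) pl p (p * n + b) %[mod p])%N.
Proof.
move=> ha hb hcs hsz hall n.
have hp := pchar_Fp pr.
have hrel : forall N t, (p <= N)%N ->
    \sum_(a <- sa) (P' 'F_p p N)`_(p * t + a) = \sum_(b <- sb) (P' 'F_p p N)`_(p * t + b).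
  move=> N t hN; rewrite (P'_short hp) ?(leq_trans (leq_pred p)) // hcs.
  under eq_bigr do rewrite coef_fromlist.
  under [RHS]eq_bigr do rewrite coef_fromlist.
  rewrite -!intr_sumL; apply/eqP; rewrite -subr_eq0 -intrB; apply/eqP.
  have [ht|ht] := ltnP t B.
    have := allP hall t; rewrite mem_iota add0n => /(_ ht) /dvdzP [k hk].
    by rewrite /relf in hk; rewrite hk intrM -[X in _ * X]/(p%:R) pcharf0 // mulr0.
  have z s : all (fun a => a < p)%N s -> \sum_(a <- s) cs`_(p * t + a) = 0.
    move=> hs; rewrite big1_seq // => a /andP [_ ain]; rewrite nth_default //.
    apply: leq_trans hsz _; apply: leq_trans (leq_addr _ _); by rewrite leq_mul2l ht orbT.
  by rewrite !z // subr0.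
have := relation hp n ha hb hrel.
move/(congr1 (@nat_of_ord _)); rewrite !val_Fp_nat //.
Qed.

Definition cs2 : seq int := [:: 1; -1]%Z.
Definition cs3 : seq int := [:: 1; -2; 0; 2; -1]%Z.
Definition cs5 : seq int :=
  [:: 1; -4; 3; 6; -7; -2; -4; 10; 6; -10; 2; -10; 6; 10; -4; -2; -7; 6; 3; -4; 1]%Z.
Definition cs7 : seq int :=
  [:: 1; -6; 10; 6; -29; 10; 13; 22; -17; -46; 38; -34; 40; 50; -34; -34; -49; 46;
      -25; 50; 71; -2; -116; -62; 97; -68; 96; 36; 0; -36; -96; 68; -97; 62; 116;
      2; -71; -50; 25; -46; 49; 34; 34; -50; -40; 34; -38; 46; 17; -22; -13; -10;
      29; -6; -10; 6; -1]%Z.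

Lemma prod2 (R : comNzRingType) :
  \prod_(j < 2.-1) (1 - 'X^(j.+1)) ^+ (2 - minn 2 j.+1) = fromlist R cs2.
Proof. rewrite !big_ord_recr big_ord0 /= /minn /=. ring. Qed.
Lemma prod3 (R : comNzRingType) :
  \prod_(j < 3.-1) (1 - 'X^(j.+1)) ^+ (3 - minn 3 j.+1) = fromlist R cs3.
Proof. rewrite !big_ord_recr big_ord0 /= /minn /=. ring. Qed.
Lemma prod5 (R : comNzRingType) :
  \prod_(j < 5.-1) (1 - 'X^(j.+1)) ^+ (5 - minn 5 j.+1) = fromlist R cs5.
Proof. rewrite !big_ord_recr big_ord0 /= /minn /=. ring. Qed.
Lemma prod7 (R : comNzRingType) :
  \prod_(j < 7.-1) (1 - 'X^(j.+1)) ^+ (7 - minn 7 j.+1) = fromlist R cs7.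
Proof. rewrite !big_ord_recr big_ord0 /= /minn /=. ring. Qed.


Lemma chk1 : all (fun t => (2 %| relf 2 cs2 [:: 1%N] [:: 0%N] t)%Z) (iota 0 1).
Proof. by rewrite /= /relf !big_cons !big_nil. Qed.
Lemma chk2 : all (fun t => (3 %| relf 3 cs3 [:: 2%N] ([::] : seq nat) t)%Z) (iota 0 2).
Proof. by rewrite /= /relf !big_cons !big_nil. Qed.
Lemma chk3 : all (fun t => (3 %| relf 3 cs3 [:: 1%N] [:: 0%N] t)%Z) (iota 0 2).
Proof. by rewrite /= /relf !big_cons !big_nil. Qed.
Lemma chk4 : all (fun t => (5 %| relf 5 cs5 [:: 2%N] [:: 4%N] t)%Z) (iota 0 5).
Proof. by rewrite /= /relf !big_cons !big_nil. Qed.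
Lemma chk5 : all (fun t => (5 %| relf 5 cs5 [:: 1%N] [:: 3%N] t)%Z) (iota 0 5).
Proof. by rewrite /= /relf !big_cons !big_nil. Qed.
Lemma chk6 : all (fun t => (7 %| relf 7 cs7 [:: 2%N; 3%N] [:: 4%N; 5%N] t)%Z) (iota 0 9).
Proof. by rewrite /= /relf !big_cons !big_nil. Qed.

Theorem theorem2 : forall n : nat,
  (pl 2 (2 * n + 1) = pl 2 (2 * n) %[mod 2]) /\
  (pl 3 (3 * n + 2) = 0 %[mod 3]) /\
  (pl 3 (3 * n + 1) = pl 3 (3 * n) %[mod 3]) /\
  (pl 5 (5 * n + 2) = pl 5 (5 * n + 4) %[mod 5]) /\
  (pl 5 (5 * n + 1) = pl 5 (5 * n + 3) %[mod 5]) /\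
  (pl 7 (7 * n + 2) + pl 7 (7 * n + 3) = pl 7 (7 * n + 4) + pl 7 (7 * n + 5) %[mod 7]).
Proof.
move=> n.
have p2 : prime 2 by []. have p3 : prime 3 by [].
have p5 : prime 5 by []. have p7 : prime 7 by [].
have h1 := @final 2 p2 cs2 [:: 1] [:: 0] 1 erefl erefl prod2 erefl chk1 n.
have h2 := @final 3 p3 cs3 [:: 2] [::] 2 erefl erefl prod3 erefl chk2 n.
have h3 := @final 3 p3 cs3 [:: 1] [:: 0] 2 erefl erefl prod3 erefl chk3 n.
have h4 := @final 5 p5 cs5 [:: 2] [:: 4] 5 erefl erefl prod5 erefl chk4 n.
have h5 := @final 5 p5 cs5 [:: 1] [:: 3] 5 erefl erefl prod5 erefl chk5 n.
have h6 := @final 7 p7 cs7 [:: 2; 3] [:: 4; 5] 9 erefl erefl prod7 erefl chk6 n.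
move: h1 h2 h3 h4 h5 h6; rewrite !big_cons !big_nil !addn0 => h1 h2 h3 h4 h5 h6.
by split; [exact: h1|split; [exact: h2|split; [exact: h3|split; [exact: h4|split; [exact: h5|exact: h6]]]]].
Qed.
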